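(* If TDS is undecidable, then the $<$-universality problem and the $<$-inclusion problem of discounted-sum automata over infinite words are undecidable.
   Context: An instance of TDS consists of a rational discount factor $0<\lambda<1$, a rational target $t$, and rational weights $a,b$; it asks whether there exists $w\in\{a,b\}^\omega$ with $\sum_{i=0}^\infty w(i)\lambda^i=t$. A discounted-sum automaton (DSA) over infinite words is a tuple $\langle\Sigma,Q,q_{in},\delta,\gamma,\lambda\rangle$ with finite alphabet $\Sigma$, finite state set $Q$, initial state $q_{in}$, transition relation $\delta\subseteq Q\times\Sigma\times Q$, weight function $\gamma:\delta\to\mathbb Q$ and rational discount factor $0<\lambda<1$. A run on an infinite word $\sigma_1\sigma_2\cdots$ is $q_0,\sigma_1,q_1,\sigma_2,\dots$ with $q_0=q_{in}$ and $(q_i,\sigma_{i+1},q_{i+1})\in\delta$; every infinite run is accepting; its value is $\sum_{i=0}^\infty\lambda^i\gamma(q_i,\sigma_{i+1},q_{i+1})$, and $\mathcal A(w)$ is the infimum of the values of runs on $w$. The $<$-universality problem asks, given $\mathcal A$ and $t\in\mathbb Q$, whether $\mathcal A(w)<t$ for every infinite word $w$; the $<$-inclusion problem asks, given $\mathcal A,\mathcal B$, whether $\mathcal A(w)<\mathcal B(w)$ for every infinite word $w$. *)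

(* Defs.v *)
From Stdlib Require Import Arith List ZArith QArith Reals.
From Coquelicot Require Import Coquelicot.
Import ListNotations.

(* A concrete model of computation: Kleene's partial recursive        *)
(* functions on nat (untyped, arguments given as a list of nat).      *)

Inductive recf : Type :=
| RZero : recf
| RSucc : recf
| RProj : nat -> recf
| RComp : recf -> list recf -> recf
| RPrim : recf -> recf -> recf
| RMu   : recf -> recf.

Inductive reval : recf -> list nat -> nat -> Prop :=
| ev_zero xs : reval RZero xs 0
| ev_succ x xs : reval RSucc (x :: xs) (S x)
| ev_proj i xs : (i < length xs)%nat -> reval (RProj i) xs (nth i xs 0%nat)
| ev_comp f gs xs vs y :
    List.Forall2 (fun g v => reval g xs v) gs vs -> reval f vs y ->
    reval (RComp f gs) xs y
| ev_prim0 f g xs y : reval f xs y -> reval (RPrim f g) (0%nat :: xs) y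
| ev_primS f g n xs y z :
    reval (RPrim f g) (n :: xs) y -> reval g (n :: y :: xs) z ->
    reval (RPrim f g) (S n :: xs) z
| ev_mu f xs n :
    reval f (n :: xs) 0 ->
    (forall m, (m < n)%nat -> exists k, reval f (m :: xs) (S k)) ->
    reval (RMu f) xs n.

(* A problem [P] on instances of type [X], presented through a fixed
   (computable, surjective) decoding [dec : nat -> X] of instances from
   natural-number codes, restricted to the well-formed instances [Dom],
   is decidable iff some partial recursive function halts on every code
   of a well-formed instance with output 1 on yes-instances and 0 on
   no-instances. *)
Definition decidable_on {X : Type} (dec : nat -> X) (Dom P : X -> Prop) : Prop :=
  exists f : recf, forall n, Dom (dec n) ->
    (P (dec n) -> reval f [n] 1) /\ (~ P (dec n) -> reval f [n] 0).

(* inverse of the Cantor pairing function *)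
Definition unpair (n : nat) : nat * nat :=
  let w := ((Nat.sqrt (8 * n + 1) - 1) / 2)%nat in
  let t := (w * (w + 1) / 2)%nat in
  ((w - (n - t))%nat, (n - t)%nat).

Definition decZ (n : nat) : Z :=
  if Nat.even n then Z.of_nat (n / 2) else (- Z.of_nat ((n + 1) / 2))%Z.

Definition decQ (n : nat) : Q :=
  let (a, b) := unpair n in Qmake (decZ a) (Pos.of_succ_nat b).

Fixpoint decList_fuel {A : Type} (d : nat -> A) (fuel n : nat) : list A :=
  match fuel with
  | O => []
  | S f => match n with
           | O => []
           | S m => let (a, b) := unpair m in d a :: decList_fuel d f b
           end
  end.

Definition decList {A : Type} (d : nat -> A) (n : nat) : list A :=
  decList_fuel d n n.

Definition TDS_inst : Type := (Q * Q * Q * Q)%type.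

Definition decTDS (n : nat) : TDS_inst :=
  let (x, y) := unpair n in
  let (p, q) := unpair x in
  let (r, s) := unpair y in
  (decQ p, decQ q, decQ r, decQ s).

Definition TDS_dom (I : TDS_inst) : Prop :=
  let '(lam, t, a, b) := I in (0 < Q2R lam < 1)%R.

(* exists w in {a,b}^omega with sum_i w(i) lam^i = t;
   the infinite word is given by a choice sequence (true = a, false = b) *)
Definition TDS (I : TDS_inst) : Prop :=
  let '(lam, t, a, b) := I in
  exists c : nat -> bool,
    is_series (fun i => (Q2R (if c i then a else b) * Q2R lam ^ i)%R) (Q2R t).

(* alphabet {0,..,nsym-1}, states {0,..,nst-1}, initial state init,
   transitions (p, sigma, q, gamma(p,sigma,q)), discount factor disc *)
Record DSA : Type := mkDSA {
  nsym : nat;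
  nst : nat;
  init : nat;
  trans : list (nat * nat * nat * Q)%type;
  disc : Q
}.

Definition DSA_wf (A : DSA) : Prop :=
  (init A < nst A)%nat /\
  List.Forall (fun e : (nat * nat * nat * Q)%type =>
            let '(p, s, q, _) := e in
            (p < nst A)%nat /\ (s < nsym A)%nat /\ (q < nst A)%nat) (trans A) /\
  (* gamma is a function on the transition relation *)
  NoDup (map (fun e : (nat * nat * nat * Q)%type => let '(p, s, q, _) := e in (p, s, q))
             (trans A)) /\
  (0 < Q2R (disc A) < 1)%R.

Definition decDSA (n : nat) : DSA :=
  let (x, y) := unpair n in
  let (k, m) := unpair x in
  let (i, z) := unpair y in
  let (tr, l) := unpair z in
  mkDSA k m i
    (decList (fun c => let (u, v) := unpair c in
                       let (p, s) := unpair u in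
                       let (q, g) := unpair v in (p, s, q, decQ g)) tr)
    (decQ l).

Definition is_word (k : nat) (w : nat -> nat) : Prop := forall i, (w i < k)%nat.

(* values of the (all accepting) infinite runs of A on w:
   a run is a state sequence r with r 0 = init; g i is the weight of its
   i-th transition *)
Definition run_values (A : DSA) (w : nat -> nat) (v : R) : Prop :=
  exists (r : nat -> nat) (g : nat -> Q),
    r 0%nat = init A /\
    (forall i, In (r i, w i, r (S i), g i) (trans A)) /\
    is_series (fun i => (Q2R (g i) * Q2R (disc A) ^ i)%R) v.

(* A(w) = infimum of the values of the runs on w (+oo if there is none) *)
Definition DSA_value (A : DSA) (w : nat -> nat) : Rbar :=
  Glb_Rbar (run_values A w).

Definition univ_inst : Type := (DSA * Q)%type.
Definition decUniv (n : nat) : univ_inst :=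
  let (x, y) := unpair n in (decDSA x, decQ y).
Definition univ_dom (I : univ_inst) : Prop := DSA_wf (fst I).
Definition lt_universal (I : univ_inst) : Prop :=
  let (A, t) := I in
  forall w, is_word (nsym A) w -> Rbar_lt (DSA_value A w) (Finite (Q2R t)).

Definition incl_inst : Type := (DSA * DSA)%type.
Definition decIncl (n : nat) : incl_inst :=
  let (x, y) := unpair n in (decDSA x, decDSA y).
Definition incl_dom (I : incl_inst) : Prop :=
  DSA_wf (fst I) /\ DSA_wf (snd I) /\ nsym (fst I) = nsym (snd I).
Definition lt_inclusion (I : incl_inst) : Prop :=
  let (A, B) := I in
  forall w, is_word (nsym A) w -> Rbar_lt (DSA_value A w) (DSA_value B w).

(* Main.v *)
Require Import Defs.
From Stdlib Require Import Arith List ZArith QArith Qreals Reals Lia Lra.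
From Coquelicot Require Import Coquelicot.

Module M1.
Import ListNotations.
Open Scope nat_scope.

Record prog (k : nat) := Prog {
  code : recf;
  sem : list nat -> nat;
  ok : forall xs, length xs = k -> reval code xs (sem xs) }.
Arguments code {k}. Arguments sem {k}. Arguments ok {k}.

Definition pproj (k i : nat) (H : (i < k)%nat) : prog k.
Proof.
  refine (Prog k (RProj i) (fun xs => nth i xs 0) _).
  intros xs Hl. constructor. lia.
Defined.

Definition pzero (k : nat) : prog k :=
  Prog k RZero (fun _ => 0) (fun xs _ => ev_zero xs).

Definition psucc {k} (A : prog k) : prog k.
Proof.
  refine (Prog k (RComp RSucc [code A]) (fun xs => S (sem A xs)) _).
  intros xs Hl. econstructor.
  - constructor. apply (ok A xs Hl). constructor.
  - constructor.
Defined.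

Definition pcomp1 {k} (F : prog 1) (A : prog k) : prog k.
Proof.
  refine (Prog k (RComp (code F) [code A]) (fun xs => sem F [sem A xs]) _).
  intros xs Hl. econstructor.
  - constructor. apply (ok A xs Hl). constructor.
  - apply (ok F). reflexivity.
Defined.

Definition pcomp2 {k} (F : prog 2) (A B : prog k) : prog k.
Proof.
  refine (Prog k (RComp (code F) [code A; code B]) (fun xs => sem F [sem A xs; sem B xs]) _).
  intros xs Hl. econstructor.
  - constructor. apply (ok A xs Hl). constructor. apply (ok B xs Hl). constructor.
  - apply (ok F). reflexivity.
Defined.

Definition primsem {k} (F : prog k) (G : prog (S (S k))) (xs : list nat) : nat :=
  match xs with
  | [] => 0
  | n :: ys => nat_rect (fun _ => nat) (sem F ys) (fun m acc => sem G (m :: acc :: ys)) n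
  end.

Definition pprim {k} (F : prog k) (G : prog (S (S k))) : prog (S k).
Proof.
  refine (Prog (S k) (RPrim (code F) (code G)) (primsem F G) _).
  intros [|n ys] Hl; [discriminate|]. simpl in Hl. injection Hl as Hl.
  simpl. induction n as [|n IH]; simpl.
  - constructor. apply (ok F ys Hl).
  - econstructor. apply IH. apply (ok G). simpl. lia.
Defined.

Fixpoint pconst (k c : nat) : prog k :=
  match c with O => pzero k | S c' => psucc (pconst k c') end.

Lemma pconst_sem k c xs : sem (pconst k c) xs = c.
Proof. induction c; simpl; auto. Qed.

Definition padd : prog 2 := pprim (pproj 1 0 ltac:(lia)) (psucc (pproj 3 1 ltac:(lia))).
Lemma padd_sem x y : sem padd [x; y] = x + y.
Proof. simpl. induction x; simpl; auto. Qed.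

Definition ppred : prog 1 := pprim (pzero 0) (pproj 2 0 ltac:(lia)).
Lemma ppred_sem x : sem ppred [x] = pred x.
Proof. destruct x; reflexivity. Qed.

Definition psub' : prog 2 := pprim (pproj 1 0 ltac:(lia)) (pcomp1 ppred (pproj 3 1 ltac:(lia))).
Definition psub : prog 2 := pcomp2 psub' (pproj 2 1 ltac:(lia)) (pproj 2 0 ltac:(lia)).
Lemma psub_sem x y : sem psub [x; y] = x - y.
Proof.
  change (sem psub [x;y]) with (sem psub' [y; x]).
  simpl. induction y; simpl. lia. rewrite IHy. destruct (x - y) eqn:E; simpl; lia.
Qed.

Definition pmul : prog 2 := pprim (pzero 1) (pcomp2 padd (pproj 3 1 ltac:(lia)) (pproj 3 2 ltac:(lia))).
Lemma pmul_sem x y : sem pmul [x; y] = x * y.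
Proof.
  simpl. induction x; simpl; auto. rewrite IHx.
  change (sem padd [x * y; y] = S x * y). rewrite padd_sem. lia.
Qed.

Ltac sems := cbn [sem pcomp1 pcomp2 psucc pproj pzero nth];
  repeat (rewrite ?padd_sem, ?psub_sem, ?pmul_sem, ?ppred_sem, ?pconst_sem).

Definition ppar : prog 1 := pprim (pzero 0) (pcomp2 psub (pconst 2 1) (pproj 2 1 ltac:(lia))).
Lemma ppar_sem x : sem ppar [x] = x mod 2.
Proof.
  induction x. reflexivity.
  change (sem ppar [S x]) with (sem (pcomp2 psub (pconst 2 1) (pproj 2 1 ltac:(lia))) [x; sem ppar [x]]).
  sems. rewrite IHx. rewrite Nat.add_mod with (a:=1) by lia.
  pose proof (Nat.mod_upper_bound x 2). destruct (x mod 2) as [|[|]] eqn:E; simpl; lia.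
Qed.

Definition pdiv2 : prog 1 := pprim (pzero 0) (pcomp2 padd (pproj 2 1 ltac:(lia)) (pcomp1 ppar (pproj 2 0 ltac:(lia)))).
Lemma pdiv2_sem x : sem pdiv2 [x] = x / 2.
Proof.
  induction x. reflexivity.
  change (sem pdiv2 [S x]) with (sem (pcomp2 padd (pproj 2 1 ltac:(lia)) (pcomp1 ppar (pproj 2 0 ltac:(lia)))) [x; sem pdiv2 [x]]).
  sems. rewrite ppar_sem, IHx.
  pose proof (Nat.div_mod x 2). pose proof (Nat.mod_upper_bound x 2).
  pose proof (Nat.div_mod (S x) 2). pose proof (Nat.mod_upper_bound (S x) 2).
  rewrite Nat.add_mod with (a:=1) in * by lia.
  destruct (x mod 2) as [|[|]] eqn:E; simpl in *; lia.
Qed.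

Fixpoint tri (n : nat) : nat := match n with O => O | S m => tri m + S m end.

Definition ptri : prog 1 := pprim (pzero 0) (pcomp2 padd (pproj 2 1 ltac:(lia)) (psucc (pproj 2 0 ltac:(lia)))).
Lemma ptri_sem x : sem ptri [x] = tri x.
Proof.
  induction x. reflexivity.
  change (sem ptri [S x]) with (sem (pcomp2 padd (pproj 2 1 ltac:(lia)) (psucc (pproj 2 0 ltac:(lia)))) [x; sem ptri [x]]).
  sems. rewrite IHx. reflexivity.
Qed.

Definition pairf (x y : nat) : nat := tri (x + y) + y.

Definition ppair : prog 2 :=
  pcomp2 padd (pcomp1 ptri (pcomp2 padd (pproj 2 0 ltac:(lia)) (pproj 2 1 ltac:(lia)))) (pproj 2 1 ltac:(lia)).
Lemma ppair_sem x y : sem ppair [x; y] = pairf x y.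
Proof. unfold ppair. sems. rewrite ptri_sem. reflexivity. Qed.

End M1.
Import M1.

Module M2.
Import ListNotations.
Open Scope nat_scope.

Lemma tri2 n : tri n * 2 = n * (n + 1).
Proof. induction n; simpl; lia. Qed.

Lemma tri_div n : n * (n + 1) / 2 = tri n.
Proof. rewrite <- tri2. apply Nat.div_mul. lia. Qed.

Lemma tri_mono a b : a <= b -> tri a <= tri b.
Proof. induction 1; simpl; lia. Qed.

Definition wf (n : nat) : nat := (Nat.sqrt (8 * n + 1) - 1) / 2.

Lemma wf_spec n : tri (wf n) <= n < tri (S (wf n)).
Proof.
  unfold wf. set (r := Nat.sqrt (8 * n + 1)).
  pose proof (Nat.sqrt_spec (8 * n + 1) ltac:(lia)) as [H1 H2]. fold r in H1, H2.
  assert (r >= 1). { destruct r; simpl in *; lia. }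
  pose proof (Nat.div_mod (r - 1) 2 ltac:(lia)). pose proof (Nat.mod_upper_bound (r-1) 2 ltac:(lia)).
  set (w := (r - 1) / 2) in *. set (e := (r - 1) mod 2) in *.
  pose proof (tri2 w). pose proof (tri2 (S w)).
  split; nia.
Qed.

Lemma wf_unique s n : tri s <= n < tri (S s) -> wf n = s.
Proof.
  intros [H1 H2]. pose proof (wf_spec n) as [H3 H4].
  destruct (Nat.lt_trichotomy (wf n) s) as [Hl|[He|Hl]]; auto.
  - pose proof (tri_mono (S (wf n)) s Hl). lia.
  - pose proof (tri_mono (S s) (wf n) Hl). lia.
Qed.

Lemma unpair_eq n : unpair n = (wf n - (n - tri (wf n)), n - tri (wf n)).
Proof.
  unfold unpair. fold (wf n). rewrite tri_div. reflexivity.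
Qed.

Lemma unpair_pair x y : unpair (pairf x y) = (x, y).
Proof.
  rewrite unpair_eq. unfold pairf.
  rewrite (wf_unique (x + y)). f_equal; lia.
  simpl. lia.
Qed.

Definition pmuf : prog 2 :=
  pcomp2 psub (psucc (pproj 2 1 ltac:(lia))) (pcomp1 ptri (psucc (pproj 2 0 ltac:(lia)))).
Lemma pmuf_sem s n : sem pmuf [s; n] = S n - tri (S s).
Proof. unfold pmuf. sems. rewrite ptri_sem. reflexivity. Qed.

Definition pw : prog 1.
Proof.
  refine (Prog 1 (RMu (code pmuf)) (fun xs => wf (nth 0 xs 0)) _).
  intros [|n [|]] Hl; try discriminate. simpl.
  pose proof (wf_spec n) as [H1 H2].
  constructor.
  - pose proof (ok pmuf [wf n; n] eq_refl) as H. rewrite pmuf_sem in H.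
    replace (S n - tri (S (wf n))) with 0 in H by lia. exact H.
  - intros m Hm. exists (pred (S n - tri (S m))).
    pose proof (ok pmuf [m; n] eq_refl) as H. rewrite pmuf_sem in H.
    pose proof (tri_mono (S m) (wf n) Hm).
    replace (S (pred (S n - tri (S m)))) with (S n - tri (S m)) by lia. exact H.
Defined.

Definition psnd : prog 1 := pcomp2 psub (pproj 1 0 ltac:(lia)) (pcomp1 ptri pw).
Definition pfst : prog 1 := pcomp2 psub pw psnd.
Lemma psnd_sem n : sem psnd [n] = snd (unpair n).
Proof. unfold psnd. sems. rewrite ptri_sem. rewrite unpair_eq. reflexivity. Qed.
Lemma pfst_sem n : sem pfst [n] = fst (unpair n).
Proof. unfold pfst. cbn [sem pcomp2]. rewrite psnd_sem, psub_sem. rewrite unpair_eq. reflexivity. Qed.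

End M2.
Import M2.

Module M3.
Import ListNotations.
Open Scope nat_scope.

Definition posf a := a / 2 * (1 - a mod 2).
Definition negf a := S a / 2 * (a mod 2).

Lemma decZ_pn a : decZ a = (Z.of_nat (posf a) - Z.of_nat (negf a))%Z.
Proof.
  unfold decZ, posf, negf.
  pose proof (Nat.div_mod a 2 ltac:(lia)). pose proof (Nat.mod_upper_bound a 2 ltac:(lia)).
  destruct (Nat.even a) eqn:E.
  - apply Nat.even_spec in E. destruct E as [k Hk]. subst a.
    rewrite Nat.mul_comm, Nat.Div0.mod_mul. rewrite Nat.div_mul by lia. lia.
  - assert (Nat.odd a = true) by (unfold Nat.odd; rewrite E; auto).
    apply Nat.odd_spec in H1. destruct H1 as [k Hk]. subst a.
    replace (2 * k + 1) with (1 + k * 2) by lia.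
    rewrite Nat.Div0.mod_add. simpl (1 mod 2).
    replace (S (1 + k * 2)) with ((k+1) * 2) by lia. rewrite Nat.div_mul by lia.
    replace (1 + k * 2 + 1) with ((k+1) * 2) by lia. rewrite Nat.div_mul by lia. lia.
Qed.

Definition zc P N := 2 * (P - N) + (2 * (N - P) - 1).
Lemma decZ_zc P N : decZ (zc P N) = (Z.of_nat P - Z.of_nat N)%Z.
Proof.
  rewrite decZ_pn. unfold zc, posf, negf.
  destruct (Nat.le_gt_cases N P).
  - replace (N - P) with 0 by lia. replace (2 * (P - N) + (2 * 0 - 1)) with ((P - N) * 2) by lia.
    rewrite Nat.Div0.mod_mul, Nat.div_mul by lia. simpl. lia.
  - replace (P - N) with 0 by lia. replace (2 * 0 + (2 * (N - P) - 1)) with (1 + (N - P - 1) * 2) by lia.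
    rewrite Nat.Div0.mod_add. simpl (1 mod 2).
    replace (S (1 + (N - P - 1) * 2)) with ((N - P) * 2) by lia.
    rewrite Nat.div_mul by lia.
    replace (1 + (N - P - 1) * 2) with (1 + (N - P - 1) * 2) by lia.
    rewrite Nat.div_add by lia. simpl. lia.
Qed.

Definition qsubf x y :=
  let ax := fst (unpair x) in let bx := snd (unpair x) in
  let ay := fst (unpair y) in let by_ := snd (unpair y) in
  pairf (zc (posf ax * S by_ + negf ay * S bx) (negf ax * S by_ + posf ay * S bx))
        (pred (S bx * S by_)).

Lemma decQ_pair a b : decQ (pairf a b) = Qmake (decZ a) (Pos.of_succ_nat b).
Proof. unfold decQ. rewrite unpair_pair. reflexivity. Qed.

Lemma qsubf_ok x y : (decQ (qsubf x y) == decQ x - decQ y)%Q.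
Proof.
  unfold qsubf. rewrite decQ_pair.
  unfold decQ. destruct (unpair x) as [ax bx]. destruct (unpair y) as [ay by_]. simpl.
  rewrite decZ_zc. unfold Qeq, Qminus, Qplus, Qopp. simpl.
  rewrite !decZ_pn. rewrite !Pos2Z.inj_mul, !Znat.Zpos_P_of_succ_nat.
  replace (S (bx + by_ * S bx)) with (S bx * S by_) by lia.
  rewrite !Nat2Z.inj_add, !Nat2Z.inj_mul, !Nat2Z.inj_succ. ring.
Qed.

Ltac sems2 := repeat (cbn [sem pcomp1 pcomp2 psucc pproj pzero nth];
  rewrite ?padd_sem, ?psub_sem, ?pmul_sem, ?ppred_sem, ?pconst_sem, ?ppar_sem, ?pdiv2_sem,
    ?ptri_sem, ?ppair_sem, ?pfst_sem, ?psnd_sem).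

Definition ppos : prog 1 := pcomp2 pmul (pcomp1 pdiv2 (pproj 1 0 ltac:(lia)))
   (pcomp2 psub (pconst 1 1) (pcomp1 ppar (pproj 1 0 ltac:(lia)))).
Lemma ppos_sem a : sem ppos [a] = posf a.
Proof. unfold ppos. sems2. reflexivity. Qed.
Definition pneg : prog 1 := pcomp2 pmul (pcomp1 pdiv2 (psucc (pproj 1 0 ltac:(lia))))
   (pcomp1 ppar (pproj 1 0 ltac:(lia))).
Lemma pneg_sem a : sem pneg [a] = negf a.
Proof. unfold pneg. sems2. reflexivity. Qed.
Definition pzc : prog 2 :=
  pcomp2 padd (pcomp2 pmul (pconst 2 2) (pcomp2 psub (pproj 2 0 ltac:(lia)) (pproj 2 1 ltac:(lia))))
    (pcomp2 psub (pcomp2 pmul (pconst 2 2) (pcomp2 psub (pproj 2 1 ltac:(lia)) (pproj 2 0 ltac:(lia)))) (pconst 2 1)).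
Lemma pzc_sem a b : sem pzc [a; b] = zc a b.
Proof. unfold pzc. sems2. reflexivity. Qed.

Definition pX : prog 2 := pproj 2 0 ltac:(lia).
Definition pY : prog 2 := pproj 2 1 ltac:(lia).
Definition pqsub : prog 2 :=
  let ax := pcomp1 pfst pX in let bx := pcomp1 psnd pX in
  let ay := pcomp1 pfst pY in let by_ := pcomp1 psnd pY in
  pcomp2 ppair
   (pcomp2 pzc (pcomp2 padd (pcomp2 pmul (pcomp1 ppos ax) (psucc by_)) (pcomp2 pmul (pcomp1 pneg ay) (psucc bx)))
               (pcomp2 padd (pcomp2 pmul (pcomp1 pneg ax) (psucc by_)) (pcomp2 pmul (pcomp1 ppos ay) (psucc bx))))
   (pcomp1 ppred (pcomp2 pmul (psucc bx) (psucc by_))).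
Lemma pqsub_sem x y : sem pqsub [x; y] = qsubf x y.
Proof. unfold pqsub, pX, pY. sems2. rewrite ?ppos_sem, ?pneg_sem, ?pzc_sem. sems2. reflexivity. Qed.

End M3.
Import M3.

Module M4.
Import ListNotations.
Open Scope nat_scope.

Lemma unpair_snd_le m : snd (unpair m) <= m.
Proof. rewrite unpair_eq. simpl. lia. Qed.

Lemma dlf_irr {A} (d : nat -> A) f1 : forall f2 n, n <= f1 -> n <= f2 ->
  decList_fuel d f1 n = decList_fuel d f2 n.
Proof.
  induction f1 as [|f1 IH]; intros [|f2] n H1 H2.
  - reflexivity.
  - replace n with 0 by lia. reflexivity.
  - replace n with 0 by lia. reflexivity.
  - destruct n as [|m]. reflexivity. simpl.
    pose proof (unpair_snd_le m). destruct (unpair m) as [a b]. simpl in *.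
    f_equal. apply IH; lia.
Qed.

Lemma decList_cons {A} (d : nat -> A) a b : decList d (S (pairf a b)) = d a :: decList d b.
Proof.
  unfold decList. cbn [decList_fuel]. rewrite unpair_pair. f_equal.
  apply dlf_irr. unfold pairf; lia. lia.
Qed.

Definition ecode p s q g := pairf (pairf p s) (pairf q g).
Definition lcons e L := S (pairf e L).

Definition delem (c : nat) : nat * nat * nat * Q :=
  let (u, v) := unpair c in let (p, s) := unpair u in let (q, g) := unpair v in (p, s, q, decQ g).

Lemma delem_ok p s q g : delem (ecode p s q g) = (p, s, q, decQ g).
Proof. unfold delem, ecode. rewrite !unpair_pair. reflexivity. Qed.

Lemma decDSA_pair k m i tr l :
  decDSA (pairf (pairf k m) (pairf i (pairf tr l))) = mkDSA k m i (decList delem tr) (decQ l).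
Proof. unfold decDSA. rewrite !unpair_pair. reflexivity. Qed.

Definition listA q r s :=
  lcons (ecode 0 0 1 (qsubf r q)) (lcons (ecode 0 1 1 (qsubf s q)) (lcons (ecode 1 0 1 r) (lcons (ecode 1 1 1 s)
  (lcons (ecode 0 0 2 (qsubf q r)) (lcons (ecode 0 1 2 (qsubf q s)) (lcons (ecode 2 0 2 (qsubf 0 r)) (lcons (ecode 2 1 2 (qsubf 0 s)) 0))))))).

Definition listB := lcons (ecode 0 0 0 0) (lcons (ecode 0 1 0 0) 0).

Definition dsaA p q r s := pairf (pairf 2 3) (pairf 0 (pairf (listA q r s) p)).
Definition dsaB p := pairf (pairf 2 1) (pairf 0 (pairf listB p)).

Definition AutB (lam : Q) : DSA := mkDSA 2 1 0 [(0,0,0,decQ 0); (0,1,0,decQ 0)] lam.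

Lemma decDSA_A p q r s : decDSA (dsaA p q r s) =
  mkDSA 2 3 0 [(0,0,1,decQ (qsubf r q)); (0,1,1,decQ (qsubf s q)); (1,0,1,decQ r); (1,1,1,decQ s);
               (0,0,2,decQ (qsubf q r)); (0,1,2,decQ (qsubf q s)); (2,0,2,decQ (qsubf 0 r)); (2,1,2,decQ (qsubf 0 s))] (decQ p).
Proof.
  unfold dsaA. rewrite decDSA_pair. f_equal. unfold listA, lcons.
  rewrite !decList_cons, !delem_ok. reflexivity.
Qed.

Lemma decDSA_B p : decDSA (dsaB p) = AutB (decQ p).
Proof.
  unfold dsaB. rewrite decDSA_pair. unfold AutB. unfold listB, lcons.
  rewrite !decList_cons, !delem_ok. reflexivity.
Qed.

Definition pe (p s q : nat) (g : prog 1) : prog 1 :=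
  pcomp2 ppair (pconst 1 (pairf p s)) (pcomp2 ppair (pconst 1 q) g).
Definition pcons (e L : prog 1) : prog 1 := psucc (pcomp2 ppair e L).
Lemma pe_sem p s q g n : sem (pe p s q g) [n] = ecode p s q (sem g [n]).
Proof. unfold pe. sems2. reflexivity. Qed.
Lemma pcons_sem e L n : sem (pcons e L) [n] = lcons (sem e [n]) (sem L [n]).
Proof. unfold pcons. sems2. reflexivity. Qed.

Definition pN : prog 1 := pproj 1 0 ltac:(lia).
Definition pp : prog 1 := pcomp1 pfst (pcomp1 pfst pN).
Definition pq : prog 1 := pcomp1 psnd (pcomp1 pfst pN).
Definition pr : prog 1 := pcomp1 pfst (pcomp1 psnd pN).
Definition ps : prog 1 := pcomp1 psnd (pcomp1 psnd pN).
Definition pqs (A B : prog 1) : prog 1 := pcomp2 pqsub A B.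
Lemma pqs_sem A B n : sem (pqs A B) [n] = qsubf (sem A [n]) (sem B [n]).
Proof. unfold pqs. cbn [sem pcomp2]. apply pqsub_sem. Qed.

Definition pListA : prog 1 :=
  pcons (pe 0 0 1 (pqs pr pq)) (pcons (pe 0 1 1 (pqs ps pq)) (pcons (pe 1 0 1 pr) (pcons (pe 1 1 1 ps)
  (pcons (pe 0 0 2 (pqs pq pr)) (pcons (pe 0 1 2 (pqs pq ps)) (pcons (pe 2 0 2 (pqs (pzero 1) pr))
  (pcons (pe 2 1 2 (pqs (pzero 1) ps)) (pzero 1)))))))).
Definition pListB : prog 1 := pcons (pe 0 0 0 (pzero 1)) (pcons (pe 0 1 0 (pzero 1)) (pzero 1)).

Definition pdsa (L : prog 1) (k m : nat) : prog 1 :=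
  pcomp2 ppair (pconst 1 (pairf k m)) (pcomp2 ppair (pzero 1) (pcomp2 ppair L pp)).
Lemma pdsa_sem L k m n : sem (pdsa L k m) [n] = pairf (pairf k m) (pairf 0 (pairf (sem L [n]) (sem pp [n]))).
Proof. unfold pdsa. sems2. reflexivity. Qed.

Definition pHU : prog 1 := pcomp2 ppair (pdsa pListA 2 3) (pzero 1).
Definition pHI : prog 1 := pcomp2 ppair (pdsa pListA 2 3) (pdsa pListB 2 1).

Definition P4 n := fst (unpair (fst (unpair n))).
Definition Q4 n := snd (unpair (fst (unpair n))).
Definition R4 n := fst (unpair (snd (unpair n))).
Definition S4 n := snd (unpair (snd (unpair n))).

Lemma pp_sem n : sem pp [n] = P4 n. Proof. unfold pp, pN. sems2. reflexivity. Qed.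
Lemma pq_sem n : sem pq [n] = Q4 n. Proof. unfold pq, pN. sems2. reflexivity. Qed.
Lemma pr_sem n : sem pr [n] = R4 n. Proof. unfold pr, pN. sems2. reflexivity. Qed.
Lemma ps_sem n : sem ps [n] = S4 n. Proof. unfold ps, pN. sems2. reflexivity. Qed.

Lemma pHU_sem n : sem pHU [n] = pairf (dsaA (P4 n) (Q4 n) (R4 n) (S4 n)) 0.
Proof.
  unfold pHU. cbn [sem pcomp2 pzero]. rewrite ppair_sem, pdsa_sem, pp_sem. f_equal.
  unfold pListA. rewrite !pcons_sem, !pe_sem, !pqs_sem, pq_sem, pr_sem, ps_sem.
  change (sem (pzero 1) [n]) with 0. unfold dsaA, listA. reflexivity.
Qed.

Lemma pHI_sem n : sem pHI [n] = pairf (dsaA (P4 n) (Q4 n) (R4 n) (S4 n)) (dsaB (P4 n)).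
Proof.
  unfold pHI. cbn [sem pcomp2 pzero]. rewrite ppair_sem, !pdsa_sem, pp_sem. f_equal.
  all: try (unfold pListA; rewrite !pcons_sem, !pe_sem, !pqs_sem, pq_sem, pr_sem, ps_sem;
    change (sem (pzero 1) [n]) with 0; unfold dsaA, listA; reflexivity).
  all: try (unfold pListB; rewrite !pcons_sem, !pe_sem; reflexivity).
Qed.

Lemma decTDS_eq n : decTDS n = (decQ (P4 n), decQ (Q4 n), decQ (R4 n), decQ (S4 n)).
Proof.
  unfold decTDS, P4, Q4, R4, S4. destruct (unpair n) as [x y]. simpl.
  destruct (unpair x), (unpair y). reflexivity.
Qed.

End M4.
Import M4.

Module M5.
Import ListNotations.
Open Scope R_scope.

Lemma tail_series (a : nat -> R) (l : R) : is_series a l -> is_series (fun k => a (S k)) (l - a 0%nat).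
Proof.
  intro H. apply is_series_incr_1. change (is_series a (Rplus (l - a 0%nat) (a 0%nat))).
  replace (l - a 0%nat + a 0%nat) with l by ring. exact H.
Qed.

Lemma series_tail_eq (c u : nat -> R) (v : R) :
  (forall k, c (S k) = u (S k)) -> is_series u v -> is_series c (v - u 0%nat + c 0%nat).
Proof.
  intros Ht Hu. apply is_series_decr_1.
  change (is_series (fun k => c (S k)) (Rplus (v - u 0%nat + c 0%nat) (Ropp (c 0%nat)))).
  replace (v - u 0%nat + c 0%nat + - c 0%nat) with (v - u 0%nat) by ring.
  eapply is_series_ext; [|apply tail_series, Hu]. intro n; simpl; auto.
Qed.

Lemma series_tail_eq' (c u : nat -> R) (v y : R) :
  (forall k, c (S k) = u (S k)) -> is_series u v -> y = v - u 0%nat + c 0%nat -> is_series c y.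
Proof. intros H1 H2 ->. apply series_tail_eq; auto. Qed.

Lemma series_tail_val (c u : nat -> R) (v x : R) :
  (forall k, c (S k) = u (S k)) -> is_series u v -> is_series c x -> x = v - u 0%nat + c 0%nat.
Proof.
  intros Ht Hu Hc. pose proof (series_tail_eq c u v Ht Hu) as H.
  apply is_series_unique in H. apply is_series_unique in Hc. congruence.
Qed.

Lemma zero_series : is_series (fun _ : nat => 0) 0.
Proof.
  pose proof (is_series_geom (1/2) ltac:(rewrite Rabs_pos_eq; lra)) as H.
  apply (is_series_scal_l 0) in H.
  eapply is_series_ext in H. 2: { intro n. change (scal 0 ((1/2)^n)) with (0 * (1/2)^n). rewrite Rmult_0_l. reflexivity. }
  change (is_series (fun _ : nat => 0) (Rmult 0 (/ (1 - 1/2)))) in H. rewrite Rmult_0_l in H. exact H.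
Qed.

Section Val.
Variables (lam T A B : R).
Hypothesis Hlam : 0 < lam < 1.

Definition Wv (s : nat) : R := if Nat.eqb s 0 then A else B.

Lemma ex_u (w : nat -> nat) : ex_series (fun i => Wv (w i) * lam ^ i).
Proof.
  apply (@ex_series_le R_AbsRing R_CompleteNormedModule _ (fun i => (Rabs A + Rabs B) * lam ^ i)).
  - intro n. change (norm (Wv (w n) * lam ^ n)) with (Rabs (Wv (w n) * lam ^ n)).
    rewrite Rabs_mult, (Rabs_pos_eq (lam ^ n)) by (apply pow_le; lra).
    apply Rmult_le_compat_r. apply pow_le; lra.
    unfold Wv. destruct (Nat.eqb (w n) 0); pose proof (Rabs_pos A); pose proof (Rabs_pos B); lra.
  - exists ((Rabs A + Rabs B) * / (1 - lam)).
    pose proof (is_series_geom lam ltac:(rewrite Rabs_pos_eq; lra)) as H.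
    apply (is_series_scal_l (Rabs A + Rabs B)) in H. exact H.
Qed.
End Val.

Lemma glb2 (E : R -> Prop) a b : (forall x, E x <-> x = a \/ x = b) -> Glb_Rbar E = Finite (Rmin a b).
Proof.
  intro HE. apply is_glb_Rbar_unique. split.
  - intros x Hx. apply HE in Hx. simpl. destruct Hx; subst. apply Rmin_l. apply Rmin_r.
  - intros c Hc. apply Hc. apply HE. unfold Rmin. destruct (Rle_dec a b); auto.
Qed.

Definition LA (qat qbt qa qb qta qtb qna qnb : Q) : list (nat * nat * nat * Q) :=
  [(0,0,1,qat); (0,1,1,qbt); (1,0,1,qa); (1,1,1,qb);
   (0,0,2,qta); (0,1,2,qtb); (2,0,2,qna); (2,1,2,qnb)]%nat.

Section ValA.
Variables (ql qt qa qb qat qbt qta qtb qna qnb : Q).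
Hypothesis Hat : Q2R qat = Q2R qa - Q2R qt.
Hypothesis Hbt : Q2R qbt = Q2R qb - Q2R qt.
Hypothesis Hta : Q2R qta = Q2R qt - Q2R qa.
Hypothesis Htb : Q2R qtb = Q2R qt - Q2R qb.
Hypothesis Hna : Q2R qna = - Q2R qa.
Hypothesis Hnb : Q2R qnb = - Q2R qb.

Definition DA := mkDSA 2 3 0 (LA qat qbt qa qb qta qtb qna qnb) ql.

Lemma inA a b c d : In (a, b, c, d) (LA qat qbt qa qb qta qtb qna qnb) ->
  (a = 0 /\ c = 1 /\ ((b = 0 /\ d = qat) \/ (b = 1 /\ d = qbt)))%nat \/
  (a = 1 /\ c = 1 /\ ((b = 0 /\ d = qa) \/ (b = 1 /\ d = qb)))%nat \/
  (a = 0 /\ c = 2 /\ ((b = 0 /\ d = qta) \/ (b = 1 /\ d = qtb)))%nat \/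
  (a = 2 /\ c = 2 /\ ((b = 0 /\ d = qna) \/ (b = 1 /\ d = qnb)))%nat.
Proof.
  intro H; simpl in H.
  repeat (destruct H as [H|H]; [injection H as <- <- <- <-; tauto|]). contradiction.
Qed.

Definition uw (w : nat -> nat) (i : nat) : R := Wv (Q2R qa) (Q2R qb) (w i) * Q2R ql ^ i.

Lemma runA w (v x : R) : is_word 2 w -> is_series (uw w) v ->
  (run_values DA w x <-> x = v - Q2R qt \/ x = Q2R qt - v).
Proof.
  intros Hw Hv. split.
  - intros [r [g [H0 [Htr Hs]]]]. simpl in H0, Hs.
    assert (H1 : (r 1 = 1 \/ r 1 = 2)%nat).
    { pose proof (inA _ _ _ _ (Htr 0%nat)) as H. rewrite H0 in H. lia. }
    assert (Hst : forall i, r (S i) = r 1%nat).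
    { induction i. reflexivity. pose proof (inA _ _ _ _ (Htr (S i))) as H. lia. }
    destruct H1 as [H1|H1].
    + left.
      assert (Ht : forall k, Q2R (g (S k)) * Q2R ql ^ (S k) = uw w (S k)).
      { intro k. pose proof (inA _ _ _ _ (Htr (S k))) as H. rewrite Hst, H1 in H.
        unfold uw, Wv.
        destruct H as [H|[[_ [_ [[-> ->]|[-> ->]]]]|H]]; simpl; try lra; lia. }
      rewrite (series_tail_val _ _ _ _ Ht Hv Hs).
      pose proof (inA _ _ _ _ (Htr 0%nat)) as H. rewrite H0, H1 in H.
      unfold uw, Wv.
      destruct H as [[_ [_ [[-> ->]|[-> ->]]]]|H]; [rewrite Hat| rewrite Hbt|]; simpl; try lra. lia.
    + right.
      assert (Hv' : is_series (fun i => - uw w i) (- v)) by (apply (is_series_opp (uw w) v Hv)).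
      assert (Ht : forall k, Q2R (g (S k)) * Q2R ql ^ (S k) = (fun i => - uw w i) (S k)).
      { intro k. pose proof (inA _ _ _ _ (Htr (S k))) as H. rewrite Hst, H1 in H.
        unfold uw, Wv.
        destruct H as [H|[H|[H|[_ [_ [[-> ->]|[-> ->]]]]]]]; try lia; [rewrite Hna|rewrite Hnb]; simpl; lra. }
      rewrite (series_tail_val _ _ _ _ Ht Hv' Hs).
      pose proof (inA _ _ _ _ (Htr 0%nat)) as H. rewrite H0, H1 in H.
      unfold uw, Wv.
      destruct H as [H|[H|[[_ [_ [[-> ->]|[-> ->]]]]|H]]]; try lia; [rewrite Hta| rewrite Htb]; simpl; lra.
  - intros [->| ->].
    + exists (fun i => match i with O => 0 | _ => 1 end)%nat.
      exists (fun i => match i with O => if Nat.eqb (w 0%nat) 0 then qat else qbt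
                               | _ => if Nat.eqb (w i) 0 then qa else qb end).
      split; [reflexivity|split].
      * intro i. pose proof (Hw i). simpl.
        destruct i; destruct (w _) as [|[|]] eqn:E; simpl; try lia; tauto.
      * simpl. apply (series_tail_eq' _ (uw w) v); [|exact Hv|].
        { intro k. unfold uw, Wv. destruct (Nat.eqb (w (S k)) 0); reflexivity. }
        unfold uw, Wv. destruct (Nat.eqb (w 0%nat) 0); simpl; [rewrite Hat|rewrite Hbt]; ring.
    + exists (fun i => match i with O => 0 | _ => 2 end)%nat.
      exists (fun i => match i with O => if Nat.eqb (w 0%nat) 0 then qta else qtb
                               | _ => if Nat.eqb (w i) 0 then qna else qnb end).
      split; [reflexivity|split].
      * intro i. pose proof (Hw i). simpl.
        destruct i; destruct (w _) as [|[|]] eqn:E; simpl; try lia; tauto.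
      * simpl.
        assert (Hv' : is_series (fun i => - uw w i) (- v)) by (apply (is_series_opp (uw w) v Hv)).
        apply (series_tail_eq' _ (fun i => - uw w i) (- v)); [|exact Hv'|].
        { intro k. unfold uw, Wv.
          destruct (Nat.eqb (w (S k)) 0); [rewrite Hna|rewrite Hnb]; ring. }
        unfold uw, Wv. destruct (Nat.eqb (w 0%nat) 0); simpl; [rewrite Hta|rewrite Htb]; ring.
Qed.

Lemma valA w (v : R) : is_word 2 w -> is_series (uw w) v ->
  DSA_value DA w = Finite (Rmin (v - Q2R qt) (Q2R qt - v)).
Proof. intros Hw Hv. apply glb2. intro x. apply runA; auto. Qed.

End ValA.

End M5.
Import M5.

Module M6.
Import ListNotations.

Lemma decQ0 : Q2R (decQ 0) = 0%R.
Proof. replace (decQ 0) with (0 # 1)%Q by (vm_compute; reflexivity). unfold Q2R. simpl. lra. Qed.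

Lemma qs_R x y : Q2R (decQ (qsubf x y)) = (Q2R (decQ x) - Q2R (decQ y))%R.
Proof. rewrite (Qeq_eqR _ _ (qsubf_ok x y)). apply Q2R_minus. Qed.

Lemma negcomp (H : prog 1) f n y : reval f [sem H [n]] y ->
  reval (RComp (code psub) [RComp RSucc [RZero]; RComp f [code H]]) [n] (1 - y).
Proof.
  intro Hf. econstructor.
  - constructor. { econstructor. constructor. constructor. constructor. constructor. }
    constructor. { econstructor. constructor. apply (ok H). reflexivity. constructor. exact Hf. }
    constructor.
  - rewrite <- psub_sem. apply (ok psub). reflexivity.
Qed.

Lemma valB ql w : is_word 2 w -> DSA_value (AutB ql) w = Finite 0.
Proof.
  intro Hw. replace 0%R with (Rmin 0 0) by (unfold Rmin; destruct Rle_dec; lra).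
  apply glb2. intro x. split.
  - intros [r [g [H0 [Htr Hs]]]]. left.
    assert (Hg : forall i, g i = decQ 0).
    { intro i. pose proof (Htr i) as H. simpl in H.
      destruct H as [H|[H|[]]]; injection H; auto. }
    eapply is_series_ext in Hs. 2: { intro i. rewrite Hg, decQ0, Rmult_0_l. reflexivity. }
    apply is_series_unique in Hs. pose proof (is_series_unique _ _ zero_series). congruence.
  - intros [->| ->]; exists (fun _ => 0%nat), (fun _ => decQ 0); split; [reflexivity|split|reflexivity|split].
    1,3: intro i; pose proof (Hw i); simpl; destruct (w i) as [|[|]]; simpl; try lia; tauto.
    all: eapply is_series_ext; [|exact zero_series]; intro i; simpl; rewrite decQ0; ring.
Qed.

Section Main.
Variable n : nat.
Let p := P4 n. Let q := Q4 n. Let r := R4 n. Let s := S4 n.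
Definition DD := DA (decQ p) (decQ r) (decQ s) (decQ (qsubf r q)) (decQ (qsubf s q)) (decQ (qsubf q r))
          (decQ (qsubf q s)) (decQ (qsubf 0 r)) (decQ (qsubf 0 s)).

Lemma DD_eq : decDSA (dsaA p q r s) = DD.
Proof. rewrite decDSA_A. reflexivity. Qed.

Lemma DD_val w v : is_word 2 w -> is_series (uw (decQ p) (decQ r) (decQ s) w) v ->
  DSA_value DD w = Finite (Rmin (v - Q2R (decQ q)) (Q2R (decQ q) - v)).
Proof.
  intros. apply valA; auto; rewrite ?qs_R, ?decQ0; ring.
Qed.

Hypothesis Hdom : (0 < Q2R (decQ p) < 1)%R.

Lemma key : (forall w, is_word 2 w -> Rbar_lt (DSA_value DD w) (Finite 0)) <-> ~ TDS (decTDS n).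
Proof.
  rewrite decTDS_eq. fold p q r s. simpl. split.
  - intros H [c Hc].
    set (w := fun i => if c i then 0%nat else 1%nat).
    assert (Hw : is_word 2 w) by (intro i; unfold w; destruct (c i); lia).
    assert (Hv : is_series (uw (decQ p) (decQ r) (decQ s) w) (Q2R (decQ q))).
    { eapply is_series_ext; [|exact Hc]. intro i. unfold uw, Wv, w. destruct (c i); reflexivity. }
    specialize (H w Hw). rewrite (DD_val w _ Hw Hv) in H. simpl in H.
    unfold Rmin in H. destruct Rle_dec; lra.
  - intros HT w Hw.
    destruct (ex_u (Q2R (decQ p)) (Q2R (decQ r)) (Q2R (decQ s)) Hdom w) as [v Hv].
    rewrite (DD_val w v Hw Hv). simpl.
    destruct (Req_dec v (Q2R (decQ q))) as [E|E].
    + exfalso. apply HT. exists (fun i => Nat.eqb (w i) 0). subst v.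
      eapply is_series_ext; [|exact Hv]. intro i. unfold uw, Wv. destruct (Nat.eqb (w i) 0); reflexivity.
    + unfold Rmin. destruct Rle_dec; lra.
Qed.

Lemma wfA : DSA_wf DD.
Proof.
  split; [simpl; lia|split; [|split; [|exact Hdom]]].
  - simpl. repeat constructor; lia.
  - simpl. repeat constructor; simpl; intro H; repeat destruct H as [H|H]; try discriminate; auto.
Qed.
End Main.

Lemma wfB n : (0 < Q2R (decQ (P4 n)) < 1)%R -> DSA_wf (AutB (decQ (P4 n))).
Proof.
  intro Hdom. split; [simpl; lia|split; [|split; [|exact Hdom]]].
  - simpl. repeat constructor; lia.
  - simpl. repeat constructor; simpl; intro H; repeat destruct H as [H|H]; try discriminate; auto.
Qed.


End M6.
Import M6.

Import ListNotations.
Theorem theorem29 :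
  ~ decidable_on decTDS TDS_dom TDS ->
  ~ decidable_on decUniv univ_dom lt_universal /\
  ~ decidable_on decIncl incl_dom lt_inclusion.
Proof.
  intros HT. split.
  - intros [f Hf]. apply HT. exists (RComp (code psub) [RComp RSucc [RZero]; RComp f [code pHU]]).
    intros n Hd. rewrite decTDS_eq in Hd. simpl in Hd.
    assert (Hdec : decUniv (sem pHU [n]) = (DD n, decQ 0)).
    { rewrite pHU_sem. unfold decUniv. rewrite unpair_pair. rewrite DD_eq. reflexivity. }
    specialize (Hf (sem pHU [n])). rewrite Hdec in Hf.
    destruct (Hf (wfA n Hd)) as [H1 H0].
    assert (Hk : lt_universal (DD n, decQ 0) <-> ~ TDS (decTDS n)).
    { rewrite <- (key n Hd). simpl. rewrite decQ0. tauto. }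
    split.
    + intro HTDS. refine (negcomp _ f n 0 _). apply H0. tauto.
    + intro HTDS. refine (negcomp _ f n 1 _). apply H1. tauto.
  - intros [f Hf]. apply HT. exists (RComp (code psub) [RComp RSucc [RZero]; RComp f [code pHI]]).
    intros n Hd. rewrite decTDS_eq in Hd. simpl in Hd.
    assert (Hdec : decIncl (sem pHI [n]) = (DD n, AutB (decQ (P4 n)))).
    { rewrite pHI_sem. unfold decIncl. rewrite unpair_pair. rewrite DD_eq, decDSA_B. reflexivity. }
    specialize (Hf (sem pHI [n])). rewrite Hdec in Hf.
    destruct (Hf (conj (wfA n Hd) (conj (wfB n Hd) eq_refl))) as [H1 H0].
    assert (Hk : lt_inclusion (DD n, AutB (decQ (P4 n))) <-> ~ TDS (decTDS n)).
    { rewrite <- (key n Hd). simpl. split; intros H w Hw; specialize (H w Hw);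
      rewrite (valB _ w Hw) in *; exact H. }
    split.
    + intro HTDS. refine (negcomp _ f n 0 _). apply H0. tauto.
    + intro HTDS. refine (negcomp _ f n 1 _). apply H1. tauto.
Qed.
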